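(* Let $A$ and $H$ be Hopf algebras and let $(A,H,\triangleleft,\triangleright)$ and $(A,H,\triangleleft',\triangleright')$ be two matched pairs of Hopf algebras. Then there is an isomorphism $A\bowtie H\cong A\bowtie' H$ which is simultaneously a Hopf algebra isomorphism, a left $A$-module map and a right $H$-comodule map if and only if $\triangleleft'=\triangleleft$ and there exists a coalgebra lazy $1$-cocycle $u\in H^1_{l,c}(H,A)$ such that for all $h,g\in H$, $c\in A$: $h\triangleright' c=u(h_{(1)})(h_{(2)}\triangleright c_{(1)})S_A\bigl(u(h_{(3)}\triangleleft c_{(2)})\bigr)$, $u(h_{(1)})(h_{(2)}\triangleright u(g_{(1)}))S_A\bigl(u(h_{(3)}g_{(2)})\bigr)=\varepsilon_H(g)\varepsilon_H(h)1_A$, $h\triangleleft u(g)=\varepsilon_H(g)\,h$.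
   Context: $k$ is a field; Sweedler notation. A matched pair of Hopf algebras is a system $(A,H,\triangleleft,\triangleright)$ with $A,H$ Hopf algebras, $\triangleleft:H\otimes A\to H$, $\triangleright:H\otimes A\to A$ coalgebra maps making $A$ a left $H$-module and $H$ a right $A$-module, such that $1_H\triangleleft a=\varepsilon_A(a)1_H$, $h\triangleright 1_A=\varepsilon_H(h)1_A$, $g\triangleright(ab)=(g_{(1)}\triangleright a_{(1)})((g_{(2)}\triangleleft a_{(2)})\triangleright b)$, $(gh)\triangleleft a=(g\triangleleft(h_{(1)}\triangleright a_{(1)}))(h_{(2)}\triangleleft a_{(2)})$, $g_{(1)}\triangleleft a_{(1)}\otimes g_{(2)}\triangleright a_{(2)}=g_{(2)}\triangleleft a_{(2)}\otimes g_{(1)}\triangleright a_{(1)}$. The bicrossed product $A\bowtie H$ is $A\otimes H$ with multiplication $(a\bowtie h)(c\bowtie g)=a(h_{(1)}\triangleright c_{(1)})\bowtie(h_{(2)}\triangleleft c_{(2)})g$, unit $1_A\bowtie 1_H$, tensor product coalgebra structure; $A\bowtie' H$ is defined likewise with $\triangleleft',\triangleright'$. Both are left $A$-modules via $b\cdot(a\bowtie h)=ba\bowtie h$ and right $H$-comodules via $a\bowtie h\mapsto a\bowtie h_{(1)}\otimes h_{(2)}$. A coalgebra lazy $1$-cocycle is a coalgebra map $u:H\to A$ with $u(1_H)=1_A$ and $h_{(1)}\otimes u(h_{(2)})=h_{(2)}\otimes u(h_{(1)})$ for all $h\in H$; $H^1_{l,c}(H,A)$ is the set of these. *)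

(* Defs.v *)
(* Hopf algebras over a field K, with Sweedler notation encoded
   by formal tensors: an element of V (x) W is represented by a finite list
   [:: (v_1,w_1); ...] (meaning sum_i v_i (x) w_i), and two such representatives
   are compared through the universal property of the tensor product, i.e. by
   applying every multilinear map into every K-vector space U. *)
From HB Require Import structures.
From mathcomp Require Import all_boot all_order all_algebra.
Set Implicit Arguments. Unset Strict Implicit. Unset Printing Implicit Defensive.
Import GRing.Theory.
Local Open Scope ring_scope.

Definition sw {V W : Type} {U : nmodType} (t : seq (V * W)) (f : V -> W -> U) : U :=
  \sum_(p <- t) f p.1 p.2.

Section Defs.
Variable K : fieldType.

Definition lin1 {V U : lmodType K} (f : V -> U) : Prop :=
  forall (a : K) (x y : V), f (a *: x + y) = a *: f x + f y.

Definition lin2 {V1 V2 U : lmodType K} (f : V1 -> V2 -> U) : Prop :=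
  (forall y, lin1 (fun x => f x y)) /\ (forall x, lin1 (f x)).

Definition lin3 {V1 V2 V3 U : lmodType K} (f : V1 -> V2 -> V3 -> U) : Prop :=
  [/\ forall y z, lin1 (fun x => f x y z),
      forall x z, lin1 (fun y => f x y z) &
      forall x y, lin1 (f x y)].

Definition lin4 {V1 V2 V3 V4 U : lmodType K} (f : V1 -> V2 -> V3 -> V4 -> U) : Prop :=
  [/\ forall y z w, lin1 (fun x => f x y z w),
      forall x z w, lin1 (fun y => f x y z w),
      forall x y w, lin1 (fun z => f x y z w) &
      forall x y z, lin1 (f x y z)].

Record hopf_str (H : algType K) := HopfStr {
  cop : H -> seq (H * H);
  cou : H -> K;
  antip : H -> H }.

Definition is_hopf (H : algType K) (s : hopf_str H) : Prop :=
  let D := cop s in let e := cou s in let S := antip s in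
  (forall (a : K) (x y : H), e (a *: x + y) = a * e x + e y) /\
  lin1 S /\
  (forall (U : lmodType K) (f : H -> H -> U), lin2 f -> lin1 (fun x => sw (D x) f)) /\
  (forall (U : lmodType K) (f : H -> H -> H -> U), lin3 f -> forall x,
     sw (D x) (fun x1 x2 => sw (D x1) (fun y1 y2 => f y1 y2 x2))
     = sw (D x) (fun x1 x2 => sw (D x2) (fun y1 y2 => f x1 y1 y2))) /\
  (forall x, sw (D x) (fun a b => e a *: b) = x /\ sw (D x) (fun a b => e b *: a) = x) /\
  (forall (U : lmodType K) (f : H -> H -> U), lin2 f ->
     (forall x y, sw (D (x * y)) f
        = sw (D x) (fun x1 x2 => sw (D y) (fun y1 y2 => f (x1 * y1) (x2 * y2))))
     /\ sw (D 1) f = f 1 1) /\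
  (forall x y, e (x * y) = e x * e y) /\ e 1 = 1 /\
  (forall x, sw (D x) (fun a b => S a * b) = e x *: 1
          /\ sw (D x) (fun a b => a * S b) = e x *: 1).

Section MatchedPair.
Variables (A H : algType K) (sA : hopf_str A) (sH : hopf_str H).
Local Notation DA := (cop sA).
Local Notation DH := (cop sH).
Local Notation eA := (cou sA).
Local Notation eH := (cou sH).

Definition matched_pair (lt : H -> A -> H) (rt : H -> A -> A) : Prop :=
  lin2 lt /\ lin2 rt /\
  (forall (U : lmodType K) (f : H -> H -> U), lin2 f -> forall h a,
     sw (DH (lt h a)) f
     = sw (DH h) (fun h1 h2 => sw (DA a) (fun a1 a2 => f (lt h1 a1) (lt h2 a2)))) /\
  (forall h a, eH (lt h a) = eH h * eA a) /\
  (forall (U : lmodType K) (f : A -> A -> U), lin2 f -> forall h a,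
     sw (DA (rt h a)) f
     = sw (DH h) (fun h1 h2 => sw (DA a) (fun a1 a2 => f (rt h1 a1) (rt h2 a2)))) /\
  (forall h a, eA (rt h a) = eH h * eA a) /\
  (forall a, rt 1 a = a) /\ (forall g h a, rt (g * h) a = rt g (rt h a)) /\
  (forall h, lt h 1 = h) /\ (forall h a b, lt h (a * b) = lt (lt h a) b) /\
  (forall a, lt 1 a = eA a *: 1) /\ (forall h, rt h 1 = eH h *: 1) /\
  (forall g a b, rt g (a * b)
     = sw (DH g) (fun g1 g2 => sw (DA a) (fun a1 a2 => rt g1 a1 * rt (lt g2 a2) b))) /\
  (forall g h a, lt (g * h) a
     = sw (DH h) (fun h1 h2 => sw (DA a) (fun a1 a2 => lt g (rt h1 a1) * lt h2 a2))) /\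
  (forall (U : lmodType K) (f : H -> A -> U), lin2 f -> forall g a,
     sw (DH g) (fun g1 g2 => sw (DA a) (fun a1 a2 => f (lt g1 a1) (rt g2 a2)))
     = sw (DH g) (fun g1 g2 => sw (DA a) (fun a1 a2 => f (lt g2 a2) (rt g1 a1)))).

(* A linear map A (x) H -> A (x) H, given by the (formal tensor) images of the
   pure tensors a (x) h, bilinear in (a, h). *)
Definition tensor_map (psi : A -> H -> seq (A * H)) : Prop :=
  forall (U : lmodType K) (f : A -> H -> U), lin2 f -> lin2 (fun a h => sw (psi a h) f).

(* There is a linear isomorphism psi : A >< H -> A >< ' H (bicrossed products
   built on (lt, rt) and (lt', rt') resp.) which is a Hopf algebra map
   (i.e. a bialgebra map: unital algebra map + counital coalgebra map; it then
   automatically commutes with the antipodes), a left A-module map and a right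
   H-comodule map. *)
Definition bicrossed_iso (lt : H -> A -> H) (rt : H -> A -> A)
    (lt' : H -> A -> H) (rt' : H -> A -> A) : Prop :=
  exists psi : A -> H -> seq (A * H),
    tensor_map psi /\
    (exists phi : A -> H -> seq (A * H), tensor_map phi /\
       forall (U : lmodType K) (f : A -> H -> U), lin2 f -> forall a h,
         sw (psi a h) (fun x y => sw (phi x y) f) = f a h /\
         sw (phi a h) (fun x y => sw (psi x y) f) = f a h) /\
    (* algebra map: unit and multiplication
       (a >< h)(c >< g) = a (h1 |> c1) >< (h2 <| c2) g *)
    (forall (U : lmodType K) (f : A -> H -> U), lin2 f ->
       sw (psi 1 1) f = f 1 1 /\
       forall a h c g,
         sw (DH h) (fun h1 h2 => sw (DA c) (fun c1 c2 =>
             sw (psi (a * rt h1 c1) (lt h2 c2 * g)) f))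
         = sw (psi a h) (fun x y => sw (psi c g) (fun x' y' =>
             sw (DH y) (fun y1 y2 => sw (DA x') (fun x1' x2' =>
               f (x * rt' y1 x1') (lt' y2 x2' * y')))))) /\
    (forall (U : lmodType K) (f : A -> H -> A -> H -> U), lin4 f -> forall a h,
       sw (psi a h) (fun x y => sw (DA x) (fun x1 x2 => sw (DH y) (fun y1 y2 =>
          f x1 y1 x2 y2)))
       = sw (DA a) (fun a1 a2 => sw (DH h) (fun h1 h2 =>
          sw (psi a1 h1) (fun x y => sw (psi a2 h2) (fun x' y' => f x y x' y'))))) /\
    (forall a h, sw (psi a h) (fun x y => eA x * eH y) = eA a * eH h) /\
    (forall (U : lmodType K) (f : A -> H -> U), lin2 f -> forall b a h,
       sw (psi (b * a) h) f = sw (psi a h) (fun x y => f (b * x) y)) /\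
    (* right H-comodule map: a >< h |-> (a >< h1) (x) h2 *)
    (forall (U : lmodType K) (f : A -> H -> H -> U), lin3 f -> forall a h,
       sw (psi a h) (fun x y => sw (DH y) (fun y1 y2 => f x y1 y2))
       = sw (DH h) (fun h1 h2 => sw (psi a h1) (fun x y => f x y h2))).

Definition coalg_lazy_cocycle (u : H -> A) : Prop :=
  lin1 u /\
  (forall (U : lmodType K) (f : A -> A -> U), lin2 f -> forall h,
     sw (DA (u h)) f = sw (DH h) (fun h1 h2 => f (u h1) (u h2))) /\
  (forall h, eA (u h) = eH h) /\
  u 1 = 1 /\
  (forall (U : lmodType K) (f : H -> A -> U), lin2 f -> forall h,
     sw (DH h) (fun h1 h2 => f h1 (u h2)) = sw (DH h) (fun h1 h2 => f h2 (u h1))).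

End MatchedPair.
End Defs.

(* Main.v *)
From Stdlib Require Import Ring FunctionalExtensionality.
Require Import Defs.
From HB Require Import structures.
From mathcomp Require Import all_boot all_order all_algebra.
Import GRing.Theory.
Local Open Scope ring_scope.
Set Implicit Arguments. Unset Strict Implicit. Unset Printing Implicit Defensive.

Section SwBasic.
Variable K : fieldType.

Lemma sw_ext {V W : Type} {U : nmodType} (t : seq (V * W)) (f g : V -> W -> U) :
  (forall x y, f x y = g x y) -> sw t f = sw t g.
Proof. by move=> e; rewrite /sw; apply: eq_bigr => p _; rewrite e. Qed.

Lemma sw_add {V W : Type} {U : nmodType} (t : seq (V * W)) (f g : V -> W -> U) :
  sw t (fun x y => f x y + g x y) = sw t f + sw t g.
Proof. by rewrite /sw big_split. Qed.

Lemma sw_zero {V W : Type} {U : nmodType} (t : seq (V * W)) :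
  sw t (fun _ _ => (0:U)) = 0.
Proof. by rewrite /sw big1. Qed.

Lemma sw_swap {V W V' W' : Type} {U : nmodType} (t : seq (V * W)) (t' : seq (V' * W'))
  (F : V -> W -> V' -> W' -> U) :
  sw t (fun x y => sw t' (fun x' y' => F x y x' y')) =
  sw t' (fun x' y' => sw t (fun x y => F x y x' y')).
Proof. rewrite /sw; exact: exchange_big. Qed.

Lemma sw_map {V W V' W' : Type} {U : nmodType} (t : seq (V * W)) (g : V * W -> V' * W')
  (f : V' -> W' -> U) :
  sw (map g t) f = sw t (fun x y => f (g (x, y)).1 (g (x, y)).2).
Proof. by rewrite /sw big_map; apply: eq_bigr => -[]. Qed.

Lemma lin1_add {V U : lmodType K} (f : V -> U) : lin1 f -> forall x y, f (x + y) = f x + f y.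
Proof. by move=> hf x y; have := hf 1 x y; rewrite scale1r => ->; rewrite scale1r. Qed.

Lemma lin1_0 {V U : lmodType K} (f : V -> U) : lin1 f -> f 0 = 0.
Proof. move=> hf; have := lin1_add hf 0 0; rewrite addr0 => /eqP; by rewrite -subr_eq subrr eq_sym => /eqP. Qed.

Lemma lin1_scale {V U : lmodType K} (f : V -> U) : lin1 f -> forall a x, f (a *: x) = a *: f x.
Proof. by move=> hf a x; have := hf a x 0; rewrite !addr0 lin1_0 // addr0. Qed.

Lemma sw_lin {V W : Type} {X U : lmodType K} (t : seq (V * W)) (f : V -> W -> X) (L : X -> U) :
  lin1 L -> L (sw t f) = sw t (fun x y => L (f x y)).
Proof.
move=> hL; rewrite /sw; elim: t => [|p t IH]; first by rewrite !big_nil lin1_0.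
by rewrite !big_cons lin1_add // IH.
Qed.

Lemma sw_scale {V W : Type} {U : lmodType K} (t : seq (V * W)) (f : V -> W -> U) a :
  sw t (fun x y => a *: f x y) = a *: sw t f.
Proof. by rewrite /sw scaler_sumr. Qed.

Lemma sw_scal {V W : Type} {U : lmodType K} (t : seq (V * W)) (k : V -> W -> K) (v : U) :
  sw t (fun x y => k x y *: v) = sw t k *: v.
Proof. by rewrite /sw scaler_suml. Qed.

Lemma sw_mull {V W : Type} {R : pzSemiRingType} (t : seq (V * W)) (f : V -> W -> R) c :
  sw t f * c = sw t (fun x y => f x y * c).
Proof. by rewrite /sw mulr_suml. Qed.

Lemma sw_mulr {V W : Type} {R : pzSemiRingType} (t : seq (V * W)) (f : V -> W -> R) c :
  c * sw t f = sw t (fun x y => c * f x y).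
Proof. by rewrite /sw mulr_sumr. Qed.

End SwBasic.

Section LinLemmas.
Variable K : fieldType.

Definition slin {V : lmodType K} (k : V -> K) := forall a x y, k (a *: x + y) = a * k x + k y.

Lemma lin_id {V : lmodType K} : lin1 (fun x : V => x).
Proof. by []. Qed.

Lemma lin_comp {V X U : lmodType K} (L : X -> U) (g : V -> X) :
  lin1 L -> lin1 g -> lin1 (fun x => L (g x)).
Proof. by move=> hL hg a x y; rewrite hg hL. Qed.

Lemma lin_sw {V : lmodType K} {P Q : Type} {U : lmodType K} (t : seq (P * Q))
  (F : V -> P -> Q -> U) :
  (forall p q, lin1 (fun x => F x p q)) -> lin1 (fun x => sw t (F x)).
Proof.
move=> hF a x y; rewrite -sw_scale -sw_add; apply: sw_ext => p q; exact: hF.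
Qed.

Lemma lin_mull {A : lalgType K} (c : A) : lin1 (fun z : A => z * c).
Proof. by move=> a x y; rewrite mulrDl scalerAl. Qed.

Lemma lin_mulr {A : algType K} (c : A) : lin1 (fun z : A => c * z).
Proof. by move=> a x y; rewrite mulrDr scalerAr. Qed.

Lemma lin_scale {U : lmodType K} (k : K) : lin1 (fun z : U => k *: z).
Proof. by move=> a x y; rewrite scalerDr !scalerA mulrC. Qed.

Lemma lin_scal_l {V U : lmodType K} (k : V -> K) (v : U) :
  slin k -> lin1 (fun x => k x *: v).
Proof. by move=> hk a x y; rewrite hk scalerDl scalerA. Qed.

Lemma slin_comp {V X : lmodType K} (k : X -> K) (g : V -> X) :
  slin k -> lin1 g -> slin (fun x => k (g x)).
Proof. by move=> hk hg a x y; rewrite hg hk. Qed.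

Lemma slin_mull {V : lmodType K} (k : V -> K) c : slin k -> slin (fun x => k x * c).
Proof. by move=> hk a x y; rewrite hk mulrDl mulrA. Qed.

Lemma slin_mulr {V : lmodType K} (k : V -> K) c : slin k -> slin (fun x => c * k x).
Proof. by move=> hk a x y; rewrite hk mulrDr mulrCA. Qed.

Lemma slin_sw {V : lmodType K} {P Q : Type} (t : seq (P * Q)) (F : V -> P -> Q -> K) :
  (forall p q, slin (fun x => F x p q)) -> slin (fun x => sw t (F x)).
Proof.
move=> hF a x y; rewrite /sw mulr_sumr -big_split; apply: eq_bigr => p _; exact: hF.
Qed.

Lemma lin3_1 {V1 V2 V3 U : lmodType K} (f : V1 -> V2 -> V3 -> U) : lin3 f -> forall y z, lin1 (fun x => f x y z).
Proof. by case. Qed.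
Lemma lin3_2 {V1 V2 V3 U : lmodType K} (f : V1 -> V2 -> V3 -> U) : lin3 f -> forall x z, lin1 (fun y => f x y z).
Proof. by case. Qed.
Lemma lin3_3 {V1 V2 V3 U : lmodType K} (f : V1 -> V2 -> V3 -> U) : lin3 f -> forall x y, lin1 (f x y).
Proof. by case. Qed.
Lemma lin4_1 {V1 V2 V3 V4 U : lmodType K} (f : V1 -> V2 -> V3 -> V4 -> U) : lin4 f -> forall y z w, lin1 (fun x => f x y z w).
Proof. by case. Qed.
Lemma lin4_2 {V1 V2 V3 V4 U : lmodType K} (f : V1 -> V2 -> V3 -> V4 -> U) : lin4 f -> forall x z w, lin1 (fun y => f x y z w).
Proof. by case. Qed.
Lemma lin4_3 {V1 V2 V3 V4 U : lmodType K} (f : V1 -> V2 -> V3 -> V4 -> U) : lin4 f -> forall x y w, lin1 (fun z => f x y z w).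
Proof. by case. Qed.
Lemma lin4_4 {V1 V2 V3 V4 U : lmodType K} (f : V1 -> V2 -> V3 -> V4 -> U) : lin4 f -> forall x y z, lin1 (f x y z).
Proof. by case. Qed.

Lemma lin_D {H : algType K} (s : hopf_str H) {U : lmodType K} {V : lmodType K}
  (g : V -> H) (F : H -> H -> U) :
  is_hopf s -> lin1 g -> lin2 F -> lin1 (fun x => sw (cop s (g x)) F).
Proof.
move=> [_ [_ [hD _]]] hg hF; apply: (lin_comp (L := fun z => sw (cop s z) F)) => //.
exact: hD.
Qed.

Lemma lin_tm1 {A H : algType K} (psi : A -> H -> seq (A * H)) {V U : lmodType K}
  (g : V -> A) c (F : A -> H -> U) :
  tensor_map psi -> lin1 g -> lin2 F -> lin1 (fun x => sw (psi (g x) c) F).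
Proof.
move=> hp hg hF; apply: (lin_comp (L := fun z => sw (psi z c) F)) => //.
exact: (hp _ _ hF).1.
Qed.

Lemma lin_tm2 {A H : algType K} (psi : A -> H -> seq (A * H)) {V U : lmodType K}
  (g : V -> H) c (F : A -> H -> U) :
  tensor_map psi -> lin1 g -> lin2 F -> lin1 (fun x => sw (psi c (g x)) F).
Proof.
move=> hp hg hF; apply: (lin_comp (L := fun z => sw (psi c z) F)) => //.
exact: (hp _ _ hF).2.
Qed.

Lemma slin_cou {H : algType K} (s : hopf_str H) : is_hopf s -> slin (cou s).
Proof. by case. Qed.

End LinLemmas.

Ltac lin_atom :=
  first [ assumption
        | exact: lin_mull | exact: lin_mulr | exact: lin_scale | exact: lin_id
        | match goal with
          | Hx : lin2 _ |- _ => first [exact: (proj1 Hx) | exact: (proj2 Hx)]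
          | Hx : lin3 _ |- _ => first [exact: (lin3_1 Hx) | exact: (lin3_2 Hx) | exact: (lin3_3 Hx)]
          | Hx : lin4 _ |- _ => first [exact: (lin4_1 Hx) | exact: (lin4_2 Hx) | exact: (lin4_3 Hx) | exact: (lin4_4 Hx)]
          | Hx : forall _, lin1 _ |- _ => exact: Hx
          | Hx : forall _ _, lin1 _ |- _ => exact: Hx
          | Hx : forall _ _ _, lin1 _ |- _ => exact: Hx
          end ].

Ltac lin_tac :=
  cbv beta;
  lazymatch goal with
  | |- lin2 _ => split => ?; lin_tac
  | |- lin3 _ => split => ? ?; lin_tac
  | |- lin4 _ => split => ? ? ?; lin_tac
  | |- slin _ => slin_tac
  | |- lin1 _ => lin1_tac
  end
with slin_tac :=
  cbv beta;
  match goal with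
  | |- slin (fun x => sw ?t (@?F x)) => apply: (slin_sw t (F := F)) => ? ?; slin_tac
  | |- slin (fun x => cou ?s (@?g x)) =>
       apply: (slin_comp (k := cou s) (g := g)); [apply: slin_cou; assumption | lin_tac]
  | |- slin (fun x => @?k x * ?c) => apply: (slin_mull (k := k)); slin_tac
  | |- slin (fun x => ?c * @?k x) => apply: (slin_mulr (k := k)); slin_tac
  end
with lin1_tac :=
  cbv beta;
  match goal with
  | |- lin1 (fun x => x) => exact: lin_id
  | |- lin1 (fun x => sw (cop ?s (@?g x)) ?F) =>
       apply: (lin_D (s := s) (g := g) (F := F)); [assumption | lin_tac | lin_tac]
  | |- lin1 (fun x => sw (?psi (@?g x) ?c) ?F) =>
       apply: (lin_tm1 (psi := psi) (g := g) (F := F) c); [assumption | lin_tac | lin_tac]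
  | |- lin1 (fun x => sw (?psi ?c (@?g x)) ?F) =>
       apply: (lin_tm2 (psi := psi) (g := g) (F := F) c); [assumption | lin_tac | lin_tac]
  | |- lin1 (fun x => sw ?t (@?F x)) => apply: (lin_sw t (F := F)) => ? ?; lin_tac
  | |- lin1 (fun x => GRing.scale (@?k x) ?v) => apply: (lin_scal_l (k := k)); slin_tac
  | |- lin1 (fun x => ?L (@?g x)) => apply: (lin_comp (L := L) (g := g)); [lin_atom | lin_tac]
  | |- lin1 (fun x => ?L (@?g x) ?c) =>
       apply: (lin_comp (L := fun z => L z c) (g := g)); [lin_atom | lin_tac]
  | |- lin1 (fun x => ?L (@?g x) ?c ?d) =>
       apply: (lin_comp (L := fun z => L z c d) (g := g)); [lin_atom | lin_tac]
  | |- lin1 (fun x => ?L (@?g x) ?c ?d ?e) =>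
       apply: (lin_comp (L := fun z => L z c d e) (g := g)); [lin_atom | lin_tac]
  | |- lin1 ?f => lin_atom
  end.


Lemma slin_add {K : fieldType} {V : lmodType K} (k : V -> K) : slin k -> forall x y, k (x + y) = k x + k y.
Proof. by move=> hk x y; have := hk 1 x y; rewrite scale1r mul1r. Qed.
Lemma slin_0 {K : fieldType} {V : lmodType K} (k : V -> K) : slin k -> k 0 = 0.
Proof. move=> hk; have := slin_add hk 0 0; rewrite addr0 => /eqP; by rewrite -subr_eq subrr eq_sym => /eqP. Qed.
Lemma slin_scale {K : fieldType} {V : lmodType K} (k : V -> K) : slin k -> forall a x, k (a *: x) = a * k x.
Proof. by move=> hk a x; have := hk a x 0; rewrite !addr0 slin_0 // addr0. Qed.
Lemma sw_slin {K : fieldType} {V W : Type} {X : lmodType K} (t : seq (V * W)) (f : V -> W -> X) (k : X -> K) :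
  slin k -> k (sw t f) = sw t (fun x y => k (f x y)).
Proof.
move=> hk; rewrite /sw; elim: t => [|p t IH]; first by rewrite !big_nil slin_0.
by rewrite !big_cons slin_add // IH.
Qed.

Lemma Kring_th (K : fieldType) : @ring_theory (GRing.PzSemiRing.sort K) 0 1 +%R *%R (fun x y => x - y) -%R eq.
Proof. constructor => // *; [exact: add0r|exact: addrC|exact: addrA|exact: mul1r|exact: mulrC|exact: mulrA|exact: mulrDl|exact: subrr]. Qed.
Lemma Kring_th2 (K : fieldType) : @ring_theory (GRing.PzRing.sort K) 0 1 +%R *%R (fun x y => x - y) -%R eq.
Proof. constructor => // *; [exact: add0r|exact: addrC|exact: addrA|exact: mul1r|exact: mulrC|exact: mulrA|exact: mulrDl|exact: subrr]. Qed.
Lemma Kring_th3 (K : fieldType) : @ring_theory (GRing.Field.sort K) 0 1 +%R *%R (fun x y => x - y) -%R eq.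
Proof. constructor => // *; [exact: add0r|exact: addrC|exact: addrA|exact: mul1r|exact: mulrC|exact: mulrA|exact: mulrDl|exact: subrr]. Qed.
Lemma Kring_th4 (K : fieldType) : @ring_theory (GRing.PzSemiRing.sort ((K : pzRingType) : pzSemiRingType)) 0 1 +%R *%R (fun x y => x - y) -%R eq.
Proof. constructor => // *; [exact: add0r|exact: addrC|exact: addrA|exact: mul1r|exact: mulrC|exact: mulrA|exact: mulrDl|exact: subrr]. Qed.
Lemma scal_eq (K : fieldType) (U : lmodType K) (a b : GRing.PzSemiRing.sort K) (v : U) : a = b -> a *: v = b *: v.
Proof. by move=> ->. Qed.
Lemma keq (K : fieldType) (a b : K) : a = b -> a = b.
Proof. by []. Qed.
Lemma keq_s (K : fieldType) (a b : GRing.PzSemiRing.sort K) : a = b -> a = b.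
Proof. by []. Qed.
Ltac kring := apply: keq_s; ring.
Ltac kcomm := first [ done | by rewrite mulrC | by rewrite mulrA | by rewrite -mulrA
  | by rewrite mulrCA | by rewrite mulrAC | by rewrite mulrC mulrA | by rewrite mulrC -mulrA
  | by rewrite mulrA mulrC | by rewrite -mulrA mulrC | by rewrite mulrCA mulrA
  | by rewrite mulrAC mulrA | by rewrite -mulrA mulrCA | by rewrite !mulrA mulrAC
  | by rewrite -!mulrA mulrCA | ring | kring ].
Ltac scal := rewrite ?scalerA; apply: scal_eq; kcomm.

Section HopfFacts.
Variables (K : fieldType) (H : algType K) (s : hopf_str H) (hs : is_hopf s).
Local Notation D := (cop s).
Local Notation e := (cou s).
Local Notation S := (antip s).

Lemma h_slin : slin e.
Proof. by case: hs. Qed.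
Lemma h_Slin : lin1 S.
Proof. by case: hs => _ []. Qed.
Lemma h_Dlin (U : lmodType K) (f : H -> H -> U) : lin2 f -> lin1 (fun x => sw (D x) f).
Proof. by case: hs => _ [_ [hD _]]; apply: hD. Qed.
Lemma h_CA (U : lmodType K) (f : H -> H -> H -> U) : lin3 f -> forall x,
  sw (D x) (fun x1 x2 => sw (D x1) (fun y1 y2 => f y1 y2 x2))
  = sw (D x) (fun x1 x2 => sw (D x2) (fun y1 y2 => f x1 y1 y2)).
Proof. by case: hs => _ [_ [_ [hC _]]]; apply: hC. Qed.
Lemma h_cou x : sw (D x) (fun a b => e a *: b) = x /\ sw (D x) (fun a b => e b *: a) = x.
Proof. by case: hs => _ [_ [_ [_ [hc _]]]]. Qed.
Lemma h_Dmul (U : lmodType K) (f : H -> H -> U) : lin2 f -> forall x y, sw (D (x * y)) f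
        = sw (D x) (fun x1 x2 => sw (D y) (fun y1 y2 => f (x1 * y1) (x2 * y2))).
Proof. by case: hs => _ [_ [_ [_ [_ [hm _]]]]] hf; case: (hm _ _ hf). Qed.
Lemma h_D1 (U : lmodType K) (f : H -> H -> U) : lin2 f -> sw (D 1) f = f 1 1.
Proof. by case: hs => _ [_ [_ [_ [_ [hm _]]]]] hf; case: (hm _ _ hf). Qed.
Lemma h_emul x y : e (x * y) = e x * e y.
Proof. by case: hs => _ [_ [_ [_ [_ [_ [hm _]]]]]]. Qed.
Lemma h_e1 : e 1 = 1.
Proof. by case: hs => _ [_ [_ [_ [_ [_ [_ [h1 _]]]]]]]. Qed.
Lemma h_ant x : sw (D x) (fun a b => S a * b) = e x *: 1
          /\ sw (D x) (fun a b => a * S b) = e x *: 1.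
Proof. by case: hs => _ [_ [_ [_ [_ [_ [_ [_ ha]]]]]]]. Qed.

Lemma h_coul (U : lmodType K) (f : H -> U) : lin1 f -> forall x,
  sw (D x) (fun a b => e a *: f b) = f x.
Proof.
move=> hf x; rewrite -{2}(h_cou x).1 sw_lin //; apply: sw_ext => a b.
by rewrite lin1_scale.
Qed.
Lemma h_cour (U : lmodType K) (f : H -> U) : lin1 f -> forall x,
  sw (D x) (fun a b => e b *: f a) = f x.
Proof.
move=> hf x; rewrite -{2}(h_cou x).2 sw_lin //; apply: sw_ext => a b.
by rewrite lin1_scale.
Qed.
Lemma h_coul_s (k : H -> K) : slin k -> forall x, sw (D x) (fun a b => e a * k b) = k x.
Proof.
move=> hk x; rewrite -{2}(h_cou x).1 sw_slin //; apply: sw_ext => a b.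
by rewrite slin_scale.
Qed.
Lemma h_cour_s (k : H -> K) : slin k -> forall x, sw (D x) (fun a b => e b * k a) = k x.
Proof.
move=> hk x; rewrite -{2}(h_cou x).2 sw_slin //; apply: sw_ext => a b.
by rewrite slin_scale.
Qed.
Lemma h_ee x : sw (D x) (fun a b => e a * e b) = e x.
Proof. exact: h_coul_s h_slin x. Qed.

End HopfFacts.

Lemma h_coul_gen (K : fieldType) (H : algType K) (s : hopf_str H) (hs : is_hopf s)
  (U : lmodType K) (L : H -> U) (F : H -> H -> U) x :
  lin1 L -> (forall a b, F a b = cou s a *: L b) -> sw (cop s x) F = L x.
Proof. move=> hL hF; rewrite -(h_coul hs hL x); exact: sw_ext. Qed.
Lemma h_cour_gen (K : fieldType) (H : algType K) (s : hopf_str H) (hs : is_hopf s)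
  (U : lmodType K) (L : H -> U) (F : H -> H -> U) x :
  lin1 L -> (forall a b, F a b = cou s b *: L a) -> sw (cop s x) F = L x.
Proof. move=> hL hF; rewrite -(h_cour hs hL x); exact: sw_ext. Qed.

Section MP.
Variables (K : fieldType) (A H : algType K) (sA : hopf_str A) (sH : hopf_str H).
Variables (lt : H -> A -> H) (rt : H -> A -> A).
Hypothesis m : matched_pair sA sH lt rt.
Local Notation DA := (cop sA).
Local Notation DH := (cop sH).
Local Notation eA := (cou sA).
Local Notation eH := (cou sH).

Lemma mp_ltlin : lin2 lt. Proof. by case: m. Qed.
Lemma mp_rtlin : lin2 rt. Proof. by case: m => _ []. Qed.
Lemma mp_ltD (U : lmodType K) (f : H -> H -> U) : lin2 f -> forall h a,
     sw (DH (lt h a)) f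
     = sw (DH h) (fun h1 h2 => sw (DA a) (fun a1 a2 => f (lt h1 a1) (lt h2 a2))).
Proof. by case: m => _ [_ [p _]]; apply: p. Qed.
Lemma mp_elt h a : eH (lt h a) = eH h * eA a.
Proof. by case: m => _ [_ [_ [p _]]]. Qed.
Lemma mp_rtD (U : lmodType K) (f : A -> A -> U) : lin2 f -> forall h a,
     sw (DA (rt h a)) f
     = sw (DH h) (fun h1 h2 => sw (DA a) (fun a1 a2 => f (rt h1 a1) (rt h2 a2))).
Proof. by case: m => _ [_ [_ [_ [p _]]]]; apply: p. Qed.
Lemma mp_ert h a : eA (rt h a) = eH h * eA a.
Proof. by case: m => _ [_ [_ [_ [_ [p _]]]]]. Qed.
Lemma mp_rt1 a : rt 1 a = a.
Proof. by case: m => _ [_ [_ [_ [_ [_ [p _]]]]]]. Qed.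
Lemma mp_rtM g h a : rt (g * h) a = rt g (rt h a).
Proof. by case: m => _ [_ [_ [_ [_ [_ [_ [p _]]]]]]]. Qed.
Lemma mp_lt1 h : lt h 1 = h.
Proof. by case: m => _ [_ [_ [_ [_ [_ [_ [_ [p _]]]]]]]]. Qed.
Lemma mp_ltM h a b : lt h (a * b) = lt (lt h a) b.
Proof. by case: m => _ [_ [_ [_ [_ [_ [_ [_ [_ [p _]]]]]]]]]. Qed.
Lemma mp_lt1a a : lt 1 a = eA a *: 1.
Proof. by case: m => _ [_ [_ [_ [_ [_ [_ [_ [_ [_ [p _]]]]]]]]]]. Qed.
Lemma mp_rth1 h : rt h 1 = eH h *: 1.
Proof. by case: m => _ [_ [_ [_ [_ [_ [_ [_ [_ [_ [_ [p _]]]]]]]]]]]. Qed.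
Lemma mp_rtab g a b : rt g (a * b)
     = sw (DH g) (fun g1 g2 => sw (DA a) (fun a1 a2 => rt g1 a1 * rt (lt g2 a2) b)).
Proof. by case: m => _ [_ [_ [_ [_ [_ [_ [_ [_ [_ [_ [_ [p _]]]]]]]]]]]]. Qed.
Lemma mp_ltgh g h a : lt (g * h) a
     = sw (DH h) (fun h1 h2 => sw (DA a) (fun a1 a2 => lt g (rt h1 a1) * lt h2 a2)).
Proof. by case: m => _ [_ [_ [_ [_ [_ [_ [_ [_ [_ [_ [_ [_ [p _]]]]]]]]]]]]]. Qed.
End MP.

Section Core.
Variables (K : fieldType) (A H : algType K) (sA : hopf_str A) (sH : hopf_str H).
Hypotheses (hA : is_hopf sA) (hH : is_hopf sH).
Local Notation DA := (cop sA).
Local Notation DH := (cop sH).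
Local Notation eA := (cou sA).
Local Notation eH := (cou sH).
Local Notation SA := (antip sA).
Local Notation SH := (antip sH).
Variables (lt1 lt2 : H -> A -> H) (rt1 rt2 : H -> A -> A).
Hypotheses (m1 : matched_pair sA sH lt1 rt1) (m2 : matched_pair sA sH lt2 rt2).
Hypotheses (l1 : lin2 lt1) (r1 : lin2 rt1) (l2 : lin2 lt2) (r2 : lin2 rt2)
  (hSA : lin1 SA) (hSH : lin1 SH).
Add Ring KR3 : (@Kring_th K).
Variable psi : A -> H -> seq (A * H).
Hypothesis tmp : tensor_map psi.
Hypothesis unitp : forall (U : lmodType K) (f : A -> H -> U), lin2 f -> sw (psi 1 1) f = f 1 1.
Hypothesis mulp : forall (U : lmodType K) (f : A -> H -> U), lin2 f -> forall a h c g,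
         sw (DH h) (fun h1 h2 => sw (DA c) (fun c1 c2 =>
             sw (psi (a * rt1 h1 c1) (lt1 h2 c2 * g)) f))
         = sw (psi a h) (fun x y => sw (psi c g) (fun x' y' =>
             sw (DH y) (fun y1 y2 => sw (DA x') (fun x1' x2' =>
               f (x * rt2 y1 x1') (lt2 y2 x2' * y'))))).
Hypothesis coalp : forall (U : lmodType K) (f : A -> H -> A -> H -> U), lin4 f -> forall a h,
       sw (psi a h) (fun x y => sw (DA x) (fun x1 x2 => sw (DH y) (fun y1 y2 =>
          f x1 y1 x2 y2)))
       = sw (DA a) (fun a1 a2 => sw (DH h) (fun h1 h2 =>
          sw (psi a1 h1) (fun x y => sw (psi a2 h2) (fun x' y' => f x y x' y')))).
Hypothesis coup : forall a h, sw (psi a h) (fun x y => eA x * eH y) = eA a * eH h.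
Hypothesis alinp : forall (U : lmodType K) (f : A -> H -> U), lin2 f -> forall b a h,
       sw (psi (b * a) h) f = sw (psi a h) (fun x y => f (b * x) y).
Hypothesis colinp : forall (U : lmodType K) (f : A -> H -> H -> U), lin3 f -> forall a h,
       sw (psi a h) (fun x y => sw (DH y) (fun y1 y2 => f x y1 y2))
       = sw (DH h) (fun h1 h2 => sw (psi a h1) (fun x y => f x y h2)).

Definition uu (h : H) : A := sw (psi 1 h) (fun x y => eH y *: x).

Lemma uu_lin : lin1 uu.
Proof. move=> a x y; rewrite /uu; apply: ((tmp (U := A) (f := fun x y => eH y *: x) _).2 1); lin_tac. Qed.

Lemma psiE (U : lmodType K) (f : A -> H -> U) : lin2 f -> forall a h,
  sw (psi a h) f = sw (DH h) (fun h1 h2 => f (a * uu h1) h2).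
Proof.
move=> hf a h; have hu := uu_lin.
rewrite -{1}(mulr1 a) alinp //.
transitivity (sw (psi 1 h) (fun x y => sw (DH y) (fun y1 y2 => eH y1 *: f (a * x) y2))).
  by apply: sw_ext => x y; rewrite (h_coul hH (f := fun z => f (a * x) z)) //; lin_tac.
rewrite colinp; last by lin_tac.
apply: sw_ext => h1 h2; rewrite /uu (@sw_lin _ _ _ _ _ _ _ (fun z => f (a * z) h2)); last by lin_tac.
apply: sw_ext => x y; by rewrite (lin1_scale (f := fun z => f (a * z) h2)) //; lin_tac.
Qed.

Lemma psi1h (U : lmodType K) (f : A -> H -> U) : lin2 f -> forall h,
  sw (psi 1 h) f = sw (DH h) (fun h1 h2 => f (uu h1) h2).
Proof. move=> hf h; rewrite psiE //; apply: sw_ext => x y. by rewrite mul1r. Qed.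

Lemma uu1 : uu 1 = 1.
Proof. by rewrite /uu unitp ?(h_e1 hH) ?scale1r //; lin_tac. Qed.

Lemma psic1 (U : lmodType K) (f : A -> H -> U) : lin2 f -> forall c,
  sw (psi c 1) f = f c 1.
Proof.
move=> hf c; have hu := uu_lin; rewrite psiE // (h_D1 hH (f := fun h1 h2 => f (c * uu h1) h2)).
  by rewrite uu1 mulr1.
lin_tac.
Qed.

Lemma psi_uu (U : lmodType K) (L : A -> U) : lin1 L -> forall k,
  sw (psi 1 k) (fun x y => eH y *: L x) = L (uu k).
Proof.
move=> hL k; rewrite /uu (sw_lin _ _ hL); apply: sw_ext => x y; by rewrite lin1_scale.
Qed.

Lemma eu h : eA (uu h) = eH h.
Proof.
rewrite /uu (sw_slin _ _ (slin_cou hA)).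
transitivity (sw (psi 1 h) (fun x y => eA x * eH y)).
  by apply: sw_ext => x y; rewrite (slin_scale (slin_cou hA)) mulrC.
by rewrite coup (h_e1 hA) mul1r.
Qed.


Lemma ucoal (U : lmodType K) (f : A -> A -> U) : lin2 f -> forall h,
  sw (DA (uu h)) f = sw (DH h) (fun h1 h2 => f (uu h1) (uu h2)).
Proof.
move=> hf h; have hu := uu_lin.
rewrite -(psi_uu (L := fun z => sw (DA z) f)); last by lin_tac.
transitivity (sw (psi 1 h) (fun x y => sw (DA x) (fun x1 x2 => sw (DH y) (fun y1 y2 =>
   (eH y1 * eH y2) *: f x1 x2)))).
  apply: sw_ext => x y; rewrite -sw_scale; apply: sw_ext => x1 x2.
  by rewrite sw_scal (h_ee hH).
rewrite coalp; last by lin_tac.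
rewrite (h_D1 hA (f := fun a1 a2 => sw (DH h) (fun h1 h2 => sw (psi a1 h1) (fun x y =>
   sw (psi a2 h2) (fun x' y' => (eH y * eH y') *: f x x'))))); last by lin_tac.
apply: sw_ext => h1 h2.
transitivity (sw (psi 1 h1) (fun x y => eH y *: f x (uu h2))).
  apply: sw_ext => x y; rewrite -(psi_uu (L := f x)); last by lin_tac.
  by rewrite -sw_scale; apply: sw_ext => x' y'; rewrite scalerA.
by rewrite (psi_uu (L := fun z => f z (uu h2))) //; lin_tac.
Qed.

Lemma ulazy (U : lmodType K) (f : H -> A -> U) : lin2 f -> forall h,
  sw (DH h) (fun h1 h2 => f h1 (uu h2)) = sw (DH h) (fun h1 h2 => f h2 (uu h1)).
Proof.
move=> hf h; have hu := uu_lin.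
transitivity (sw (DH h) (fun h1 h2 => sw (psi 1 h1) (fun x y =>
   sw (psi 1 h2) (fun x' y' => (eA x * eH y') *: f y x')))).
  apply: sw_ext => h1 h2.
  transitivity (sw (psi 1 h1) (fun x y => eA x *: f y (uu h2))).
    rewrite psi1h; last by lin_tac.
    rewrite (h_coul_gen hH (L := fun z => f z (uu h2))) //; first by lin_tac.
    by move=> a b; rewrite eu.
  apply: sw_ext => x y; rewrite -(psi_uu (L := fun z => eA x *: f y z)); last by lin_tac.
  by apply: sw_ext => x' y'; rewrite !scalerA mulrC.
rewrite -(h_D1 hA (f := fun a1 a2 => sw (DH h) (fun h1 h2 => sw (psi a1 h1) (fun x y =>
   sw (psi a2 h2) (fun x' y' => (eA x * eH y') *: f y x'))))); last by lin_tac.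
rewrite -coalp; last by lin_tac.
rewrite -(psi1h (f := fun x y => f y x)); last by lin_tac.
apply: sw_ext => x y.
rewrite (h_coul_gen hA (L := f y)) //; first by lin_tac.
move=> a b; rewrite (h_cour_gen hH (L := fun z => eA a *: f z b)) //; first by lin_tac.
by move=> c d; rewrite scalerA mulrC.
Qed.


Lemma psi_cou a k : sw (psi a k) (fun x y => eA x *: y) = eA a *: k.
Proof.
have hu := uu_lin; rewrite psiE; last by lin_tac.
rewrite (h_coul_gen hH (L := fun z => eA a *: z)) //; first by lin_tac.
by move=> b1 b2; rewrite (h_emul hA) eu scalerA mulrC.
Qed.

Lemma lteq h c : lt2 h c = lt1 h c.
Proof.
have hu := uu_lin.
have M := mulp (f := fun x y => eA x *: y) ltac:(lin_tac) 1 h c 1.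
have E1 : sw (DH h) (fun h1 h2 => sw (DA c) (fun c1 c2 =>
             sw (psi (1 * rt1 h1 c1) (lt1 h2 c2 * 1)) (fun x y => eA x *: y))) = lt1 h c.
  rewrite (h_coul_gen hH (L := fun z => lt1 z c)) //; first by lin_tac.
  move=> h1 h2; rewrite -(h_coul hA (f := fun z => eH h1 *: lt1 h2 z)); last by lin_tac.
  by apply: sw_ext => c1 c2; rewrite psi_cou mul1r mulr1 (mp_ert m1); scal.
rewrite -E1 M psi1h; last by lin_tac.
rewrite (h_coul_gen hH (L := fun z => lt2 z c)) //; first by lin_tac.
move=> h1 h2; rewrite psic1; last by lin_tac.
rewrite -(h_coul hH (f := fun z => eH h1 *: lt2 z c)); last by lin_tac.
apply: sw_ext => y1 y2.
rewrite -(h_coul hA (f := fun z => eH y1 *: (eH h1 *: lt2 y2 z))); last by lin_tac.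
apply: sw_ext => x1 x2.
by rewrite (h_emul hA) eu (mp_ert m2) mulr1; scal.
Qed.

Lemma uS k : sw (DH k) (fun k1 k2 => uu k1 * SA (uu k2)) = eH k *: 1.
Proof.
have hu := uu_lin.
rewrite -(ucoal (f := fun x y => x * SA y)); last by lin_tac.
by rewrite (h_ant hA _).2 eu.
Qed.

Lemma Su k : sw (DH k) (fun k1 k2 => SA (uu k1) * uu k2) = eH k *: 1.
Proof.
have hu := uu_lin.
rewrite -(ucoal (f := fun x y => SA x * y)); last by lin_tac.
by rewrite (h_ant hA _).1 eu.
Qed.

Lemma ltu_aux h g : sw (DH g) (fun g1 g2 => lt2 h (uu g1) * g2) = h * g.
Proof.
have hu := uu_lin.
have M := mulp (f := fun x y => eA x *: y) ltac:(lin_tac) 1 h 1 g.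
have E1 : sw (DH h) (fun h1 h2 => sw (DA 1) (fun c1 c2 =>
             sw (psi (1 * rt1 h1 c1) (lt1 h2 c2 * g)) (fun x y => eA x *: y))) = h * g.
  rewrite (h_coul_gen hH (L := fun z => z * g)) //; first by lin_tac.
  move=> h1 h2; rewrite (h_D1 hA (f := fun c1 c2 =>
     sw (psi (1 * rt1 h1 c1) (lt1 h2 c2 * g)) (fun x y => eA x *: y))); last by lin_tac.
  by rewrite psi_cou (mp_rth1 m1) (mp_lt1 m1) mul1r (slin_scale (slin_cou hA)) (h_e1 hA) mulr1.
rewrite -E1 M psi1h; last by lin_tac.
symmetry.
rewrite (h_coul_gen hH (L := fun z => sw (DH g) (fun g1 g2 => lt2 z (uu g1) * g2))) //; first by lin_tac.
move=> h1 h2; rewrite psi1h; last by lin_tac.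
rewrite -sw_scale; apply: sw_ext => g1 g2.
rewrite -(h_coul hH (f := fun z => eH h1 *: (lt2 z (uu g1) * g2))); last by lin_tac.
apply: sw_ext => y1 y2.
rewrite -(h_coul hA (f := fun z => eH y1 *: (eH h1 *: (lt2 y2 z * g2)))); last by lin_tac.
apply: sw_ext => x1 x2.
by rewrite (h_emul hA) eu (mp_ert m2); scal.
Qed.

Lemma ltu h g : lt2 h (uu g) = eH g *: h.
Proof.
have hu := uu_lin.
symmetry.
transitivity (h * sw (DH g) (fun g1 g2 => g1 * SH g2)).
  by rewrite (h_ant hH g).2 -scalerAr mulr1.
rewrite sw_mulr.
transitivity (sw (DH g) (fun g1 g2 => sw (DH g1) (fun k1 k2 => lt2 h (uu k1) * k2) * SH g2)).
  by apply: sw_ext => g1 g2; rewrite ltu_aux mulrA.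
transitivity (sw (DH g) (fun g1 g2 => sw (DH g1) (fun k1 k2 => lt2 h (uu k1) * k2 * SH g2))).
  by apply: sw_ext => g1 g2; rewrite sw_mull.
rewrite (h_CA hH (f := fun k1 k2 g2 => lt2 h (uu k1) * k2 * SH g2)); last by lin_tac.
rewrite (h_cour_gen hH (L := fun z => lt2 h (uu z))) //; first by lin_tac.
move=> a b.
transitivity (lt2 h (uu a) * sw (DH b) (fun k1 k2 => k1 * SH k2)).
  by rewrite sw_mulr; apply: sw_ext => k1 k2; rewrite mulrA.
by rewrite (h_ant hH b).2 -scalerAr mulr1.
Qed.

Lemma rtform h c : rt1 h c =
  sw (DH h) (fun h1 h' => sw (DH h') (fun h2 h3 =>
           sw (DA c) (fun c1 c2 =>
             uu h1 * rt2 h2 c1 * SA (uu (lt2 h3 c2))))).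
Proof.
have hu := uu_lin.
have M := mulp (f := fun x y => x * SA (uu y)) ltac:(lin_tac) 1 h c 1.
have E1 : sw (DH h) (fun h1 h2 => sw (DA c) (fun c1 c2 =>
             sw (psi (1 * rt1 h1 c1) (lt1 h2 c2 * 1)) (fun x y => x * SA (uu y)))) = rt1 h c.
  rewrite (h_cour_gen hH (L := fun z => rt1 z c)) //; first by lin_tac.
  move=> h1 h2; rewrite -(h_cour hA (f := fun z => eH h2 *: rt1 h1 z)); last by lin_tac.
  apply: sw_ext => c1 c2; rewrite psiE; last by lin_tac.
  transitivity (rt1 h1 c1 * sw (DH (lt1 h2 c2)) (fun k1 k2 => uu k1 * SA (uu k2))).
    by rewrite mulr1 mul1r sw_mulr; apply: sw_ext => k1 k2; rewrite !mulrA.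
  by rewrite uS (mp_elt m1) -scalerAr mulr1; scal.
rewrite -E1 M psi1h; last by lin_tac.
apply: sw_ext => h1 h2; rewrite psic1; last by lin_tac.
by apply: sw_ext => y1 y2; apply: sw_ext => x1 x2; rewrite mulr1.
Qed.

Lemma cocyc h g :
  sw (DH h) (fun h1 h' => sw (DH h') (fun h2 h3 =>
           sw (DH g) (fun g1 g2 =>
             uu h1 * rt2 h2 (uu g1) * SA (uu (h3 * g2)))))
         = (eH g * eH h) *: 1.
Proof.
have hu := uu_lin.
have M := mulp (f := fun x y => x * SA (uu y)) ltac:(lin_tac) 1 h 1 g.
have E1 : sw (DH h) (fun h1 h2 => sw (DA 1) (fun c1 c2 =>
             sw (psi (1 * rt1 h1 c1) (lt1 h2 c2 * g)) (fun x y => x * SA (uu y)))) = (eH g * eH h) *: 1.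
  transitivity (sw (DH h) (fun h1 h2 => eH h1 *: (eH (h2 * g) *: (1 : A)))).
    apply: sw_ext => h1 h2.
    rewrite (h_D1 hA (f := fun c1 c2 =>
       sw (psi (1 * rt1 h1 c1) (lt1 h2 c2 * g)) (fun x y => x * SA (uu y)))); last by lin_tac.
    rewrite (mp_rth1 m1) (mp_lt1 m1) mul1r psiE; last by lin_tac.
    transitivity ((eH h1 *: 1) * sw (DH (h2 * g)) (fun k1 k2 => uu k1 * SA (uu k2))).
      by rewrite sw_mulr; apply: sw_ext => k1 k2; rewrite !mulrA.
    by rewrite uS -scalerAl mul1r.
  rewrite (h_coul_gen hH (L := fun z => eH (z * g) *: (1 : A))) //; last by lin_tac.
  by rewrite (h_emul hH) mulrC.
rewrite -E1 M psi1h; last by lin_tac.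
apply: sw_ext => h1 h2; rewrite psi1h; last by lin_tac.
rewrite sw_swap; apply: sw_ext => g1 g2; apply: sw_ext => y1 y2.
rewrite ucoal; last by lin_tac.
symmetry; rewrite (h_cour_gen hH (L := fun z => uu h1 * rt2 y1 (uu z) * SA (uu (y2 * g2)))) //; first by lin_tac.
move=> k1 k2; rewrite ltu -scalerAl.
rewrite (lin1_scale (f := fun z => SA (uu z))); last by lin_tac.
by rewrite -scalerAr.
Qed.

End Core.

Section Sym.
Variables (K : fieldType) (A H : algType K) (sA : hopf_str A) (sH : hopf_str H).
Hypotheses (hA : is_hopf sA) (hH : is_hopf sH).
Local Notation DA := (cop sA).
Local Notation DH := (cop sH).
Local Notation eA := (cou sA).
Local Notation eH := (cou sH).
Variables (lt lt' : H -> A -> H) (rt rt' : H -> A -> A).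
Hypotheses (l1 : lin2 lt) (r1 : lin2 rt) (l2 : lin2 lt') (r2 : lin2 rt').
Variables (psi phi : A -> H -> seq (A * H)).
Hypotheses (tmp : tensor_map psi) (tmphi : tensor_map phi).
Hypothesis inv : forall (U : lmodType K) (f : A -> H -> U), lin2 f -> forall a h,
         sw (psi a h) (fun x y => sw (phi x y) f) = f a h /\
         sw (phi a h) (fun x y => sw (psi x y) f) = f a h.
Hypothesis unitp : forall (U : lmodType K) (f : A -> H -> U), lin2 f -> sw (psi 1 1) f = f 1 1.
Hypothesis mulp : forall (U : lmodType K) (f : A -> H -> U), lin2 f -> forall a h c g,
         sw (DH h) (fun h1 h2 => sw (DA c) (fun c1 c2 =>
             sw (psi (a * rt h1 c1) (lt h2 c2 * g)) f))
         = sw (psi a h) (fun x y => sw (psi c g) (fun x' y' =>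
             sw (DH y) (fun y1 y2 => sw (DA x') (fun x1' x2' =>
               f (x * rt' y1 x1') (lt' y2 x2' * y'))))).
Hypothesis coalp : forall (U : lmodType K) (f : A -> H -> A -> H -> U), lin4 f -> forall a h,
       sw (psi a h) (fun x y => sw (DA x) (fun x1 x2 => sw (DH y) (fun y1 y2 =>
          f x1 y1 x2 y2)))
       = sw (DA a) (fun a1 a2 => sw (DH h) (fun h1 h2 =>
          sw (psi a1 h1) (fun x y => sw (psi a2 h2) (fun x' y' => f x y x' y')))).
Hypothesis coup : forall a h, sw (psi a h) (fun x y => eA x * eH y) = eA a * eH h.
Hypothesis alinp : forall (U : lmodType K) (f : A -> H -> U), lin2 f -> forall b a h,
       sw (psi (b * a) h) f = sw (psi a h) (fun x y => f (b * x) y).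
Hypothesis colinp : forall (U : lmodType K) (f : A -> H -> H -> U), lin3 f -> forall a h,
       sw (psi a h) (fun x y => sw (DH y) (fun y1 y2 => f x y1 y2))
       = sw (DH h) (fun h1 h2 => sw (psi a h1) (fun x y => f x y h2)).

Lemma inv1 (U : lmodType K) (f : A -> H -> U) : lin2 f -> forall a h,
         sw (psi a h) (fun x y => sw (phi x y) f) = f a h.
Proof. by move=> hf a h; case: (inv hf a h). Qed.
Lemma inv2 (U : lmodType K) (f : A -> H -> U) : lin2 f -> forall a h,
         sw (phi a h) (fun x y => sw (psi x y) f) = f a h.
Proof. by move=> hf a h; case: (inv hf a h). Qed.

Lemma s_unit (U : lmodType K) (f : A -> H -> U) : lin2 f -> sw (phi 1 1) f = f 1 1.
Proof.
move=> hf; rewrite -(inv1 hf) (unitp (f := fun x y => sw (phi x y) f)) //; lin_tac.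
Qed.

Lemma s_mul (U : lmodType K) (f : A -> H -> U) : lin2 f -> forall a h c g,
         sw (DH h) (fun h1 h2 => sw (DA c) (fun c1 c2 =>
             sw (phi (a * rt' h1 c1) (lt' h2 c2 * g)) f))
         = sw (phi a h) (fun x y => sw (phi c g) (fun x' y' =>
             sw (DH y) (fun y1 y2 => sw (DA x') (fun x1' x2' =>
               f (x * rt y1 x1') (lt y2 x2' * y'))))).
Proof.
move=> hf a h c g.
pose G := fun p q => sw (phi p q) f.
pose MG := fun r s r' s' => sw (DH s) (fun y1 y2 => sw (DA r') (fun x1 x2 =>
               G (r * rt' y1 x1) (lt' y2 x2 * s'))).
have hG : lin2 G by rewrite /G; lin_tac.
transitivity (sw (phi a h) (fun x y => sw (psi x y) (fun r s => MG r s c g))).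
  by rewrite inv2 /MG /G //; lin_tac.
apply: sw_ext => x y.
transitivity (sw (psi x y) (fun r s => sw (phi c g) (fun x' y' => sw (psi x' y')
   (fun r' s' => MG r s r' s')))).
  by apply: sw_ext => r s; rewrite inv2 //; rewrite /MG /G; lin_tac.
rewrite sw_swap; apply: sw_ext => x' y'.
rewrite /MG -mulp; last by rewrite /G; lin_tac.
apply: sw_ext => y1 y2; apply: sw_ext => x1 x2.
by rewrite /G inv1.
Qed.

Lemma s_coal (U : lmodType K) (F : A -> H -> A -> H -> U) : lin4 F -> forall a h,
       sw (phi a h) (fun x y => sw (DA x) (fun x1 x2 => sw (DH y) (fun y1 y2 =>
          F x1 y1 x2 y2)))
       = sw (DA a) (fun a1 a2 => sw (DH h) (fun h1 h2 =>
          sw (phi a1 h1) (fun x y => sw (phi a2 h2) (fun x' y' => F x y x' y')))).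
Proof.
move=> hF a h.
pose G := fun x y x' y' => sw (phi x y) (fun p q => sw (phi x' y') (fun p' q' => F p q p' q')).
have hG : lin4 G by rewrite /G; lin_tac.
pose CG := fun p q => sw (DA p) (fun x1 x2 => sw (DH q) (fun y1 y2 => G x1 y1 x2 y2)).
transitivity (CG a h); last by [].
rewrite -(inv2 (f := CG)); last by rewrite /CG; lin_tac.
apply: sw_ext => x y; rewrite /CG coalp //.
apply: sw_ext => x1 x2; apply: sw_ext => y1 y2; rewrite /G.
symmetry.
transitivity (sw (psi x1 y1) (fun p q => sw (phi p q) (fun r s => F r s x2 y2))); last first.
  by rewrite inv1 //; lin_tac.
apply: sw_ext => p q.
transitivity (sw (psi x2 y2) (fun p' q' => sw (phi p' q') (fun r' s' =>
   sw (phi p q) (fun r s => F r s r' s')))).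
  by apply: sw_ext => p' q'; rewrite sw_swap.
by rewrite inv1 //; lin_tac.
Qed.

Lemma oneA_neq0 : (1 : A) != 0.
Proof. exact: oner_neq0. Qed.

Lemma s_cou a h : sw (phi a h) (fun x y => eA x * eH y) = eA a * eH h.
Proof.
have E : sw (phi a h) (fun x y => (eA x * eH y) *: (1 : A)) = (eA a * eH h) *: 1.
  rewrite -(inv2 (f := fun x y => (eA x * eH y) *: (1 : A))); last by lin_tac.
  by apply: sw_ext => x y; rewrite sw_scal coup.
move: E; rewrite sw_scal => /eqP; rewrite -subr_eq0 -scalerBl scaler_eq0 (negbTE oneA_neq0) orbF subr_eq0.
by move/eqP.
Qed.

Lemma s_alin (U : lmodType K) (f : A -> H -> U) : lin2 f -> forall b a h,
       sw (phi (b * a) h) f = sw (phi a h) (fun x y => f (b * x) y).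
Proof.
move=> hf b a h.
transitivity (sw (phi a h) (fun x y => sw (psi x y) (fun p q => sw (phi (b * p) q) f))).
  by rewrite inv2 //; lin_tac.
apply: sw_ext => x y.
by rewrite -(alinp (f := fun p q => sw (phi p q) f)) ?inv1 //; lin_tac.
Qed.

Lemma s_colin (U : lmodType K) (F : A -> H -> H -> U) : lin3 F -> forall a h,
       sw (phi a h) (fun x y => sw (DH y) (fun y1 y2 => F x y1 y2))
       = sw (DH h) (fun h1 h2 => sw (phi a h1) (fun x y => F x y h2)).
Proof.
move=> hF a h.
pose G := fun x y y' => sw (phi x y) (fun p q => F p q y').
pose R := fun p q => sw (DH q) (fun q1 q2 => G p q1 q2).
transitivity (R a h); last by [].
rewrite -(inv2 (f := R)); last by rewrite /R /G; lin_tac.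
apply: sw_ext => x y; rewrite /R colinp; last by rewrite /G; lin_tac.
apply: sw_ext => y1 y2; rewrite /G inv1 //; lin_tac.
Qed.

End Sym.

Lemma bicrossed_sym (K : fieldType) (A H : algType K) (sA : hopf_str A) (sH : hopf_str H)
  (lt lt' : H -> A -> H) (rt rt' : H -> A -> A) :
  is_hopf sA -> is_hopf sH -> lin2 lt -> lin2 rt -> lin2 lt' -> lin2 rt' ->
  bicrossed_iso sA sH lt rt lt' rt' -> bicrossed_iso sA sH lt' rt' lt rt.
Proof.
move=> hA hH l1 r1 l2 r2 [psi [tmp [[phi [tmphi inv]] [mulp [coalp [coup [alinp colinp]]]]]]].
exists phi; split => //; split.
  exists psi; split => // U f hf a h; case: (inv _ _ hf a h) => e1 e2; by split.
split.
  move=> U f hf; split; first exact: (s_unit tmphi inv (fun U f hf => (mulp U f hf).1) hf).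
  exact: (s_mul hA hH l2 r2 tmphi inv (fun U f hf => (mulp U f hf).2) hf).
split; first exact: (s_coal hA hH tmphi inv coalp).
split; first exact: (s_cou hA hH inv coup).
split; first exact: (s_alin tmphi inv alinp).
exact: (s_colin hH tmphi inv colinp).
Qed.

Section Constr.
Variables (K : fieldType) (A H : algType K) (sA : hopf_str A) (sH : hopf_str H).
Hypotheses (hA : is_hopf sA) (hH : is_hopf sH).
Local Notation DA := (cop sA).
Local Notation DH := (cop sH).
Local Notation eA := (cou sA).
Local Notation eH := (cou sH).
Local Notation SA := (antip sA).
Local Notation SH := (antip sH).
Add Ring KR : (@Kring_th K).
Variables (lt : H -> A -> H) (rt rt' : H -> A -> A).
Hypotheses (m : matched_pair sA sH lt rt) (m' : matched_pair sA sH lt rt').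
Hypotheses (l1 : lin2 lt) (r1 : lin2 rt) (r2 : lin2 rt') (hSA : lin1 SA) (hSH : lin1 SH).
Variable u : H -> A.
Hypotheses (hu : lin1 u)
  (ucoal : forall (U : lmodType K) (f : A -> A -> U), lin2 f -> forall h,
     sw (DA (u h)) f = sw (DH h) (fun h1 h2 => f (u h1) (u h2)))
  (eu : forall h, eA (u h) = eH h) (u1 : u 1 = 1)
  (ulazy : forall (U : lmodType K) (f : H -> A -> U), lin2 f -> forall h,
     sw (DH h) (fun h1 h2 => f h1 (u h2)) = sw (DH h) (fun h1 h2 => f h2 (u h1))).
Hypothesis rtf : forall h c, rt' h c =
         sw (DH h) (fun h1 h' => sw (DH h') (fun h2 h3 =>
           sw (DA c) (fun c1 c2 =>
             u h1 * rt h2 c1 * SA (u (lt h3 c2))))).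
Hypothesis coc : forall h g,
         sw (DH h) (fun h1 h' => sw (DH h') (fun h2 h3 =>
           sw (DH g) (fun g1 g2 =>
             u h1 * rt h2 (u g1) * SA (u (h3 * g2)))))
         = (eH g * eH h) *: 1.
Hypothesis ltu : forall h g, lt h (u g) = eH g *: h.

Definition chi (a : A) (h : H) : seq (A * H) := map (fun p => (a * u p.1, p.2)) (DH h).
Definition chinv (a : A) (h : H) : seq (A * H) := map (fun p => (a * SA (u p.1), p.2)) (DH h).

Lemma chiE (U : nmodType) (f : A -> H -> U) a h :
  sw (chi a h) f = sw (DH h) (fun x y => f (a * u x) y).
Proof. by rewrite /chi sw_map. Qed.
Lemma chinvE (U : nmodType) (f : A -> H -> U) a h :
  sw (chinv a h) f = sw (DH h) (fun x y => f (a * SA (u x)) y).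
Proof. by rewrite /chinv sw_map. Qed.

Lemma chi_tm : tensor_map chi.
Proof.
move=> U f hf.
have [L1 L2] : lin2 (fun a h => sw (DH h) (fun x y => f (a * u x) y)) by lin_tac.
by split => z a x y; rewrite !chiE; [apply: (L1 z) | apply: (L2 z)].
Qed.
Lemma chinv_tm : tensor_map chinv.
Proof.
move=> U f hf.
have [L1 L2] : lin2 (fun a h => sw (DH h) (fun x y => f (a * SA (u x)) y)) by lin_tac.
by split => z a x y; rewrite !chinvE; [apply: (L1 z) | apply: (L2 z)].
Qed.

Lemma uS_ k : sw (DH k) (fun k1 k2 => u k1 * SA (u k2)) = eH k *: 1.
Proof. by rewrite -(ucoal (f := fun x y => x * SA y)) ?(h_ant hA _).2 ?eu //; lin_tac. Qed.
Lemma Su_ k : sw (DH k) (fun k1 k2 => SA (u k1) * u k2) = eH k *: 1.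
Proof. by rewrite -(ucoal (f := fun x y => SA x * y)) ?(h_ant hA _).1 ?eu //; lin_tac. Qed.

Lemma chi_inv (U : lmodType K) (f : A -> H -> U) : lin2 f -> forall a h,
         sw (chi a h) (fun x y => sw (chinv x y) f) = f a h /\
         sw (chinv a h) (fun x y => sw (chi x y) f) = f a h.
Proof.
move=> hf a h; split.
  rewrite chiE.
  transitivity (sw (DH h) (fun x y => sw (DH y) (fun y1 y2 => f (a * u x * SA (u y1)) y2))).
    by apply: sw_ext => x y; rewrite chinvE.
  rewrite -(h_CA hH (f := fun p q r => f (a * u p * SA (u q)) r)); last by lin_tac.
  rewrite (h_coul_gen hH (L := f a)) //; first by lin_tac.
  move=> x y.
  transitivity (f (a * sw (DH x) (fun y1 y2 => u y1 * SA (u y2))) y).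
    by rewrite (sw_lin _ _ (L := fun z => f (a * z) y)); [apply: sw_ext => ? ?; rewrite !mulrA | lin_tac].
  by rewrite uS_ -scalerAr mulr1 (lin1_scale (f := fun z => f z y)) //; lin_tac.
rewrite chinvE.
transitivity (sw (DH h) (fun x y => sw (DH y) (fun y1 y2 => f (a * SA (u x) * u y1) y2))).
  by apply: sw_ext => x y; rewrite chiE.
rewrite -(h_CA hH (f := fun p q r => f (a * SA (u p) * u q) r)); last by lin_tac.
rewrite (h_coul_gen hH (L := f a)) //; first by lin_tac.
move=> x y.
transitivity (f (a * sw (DH x) (fun y1 y2 => SA (u y1) * u y2)) y).
  by rewrite (sw_lin _ _ (L := fun z => f (a * z) y)); [apply: sw_ext => ? ?; rewrite !mulrA | lin_tac].
by rewrite Su_ -scalerAr mulr1 (lin1_scale (f := fun z => f z y)) //; lin_tac.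
Qed.

Lemma chi_unit (U : lmodType K) (f : A -> H -> U) : lin2 f -> sw (chi 1 1) f = f 1 1.
Proof. by move=> hf; rewrite chiE (h_D1 hH (f := fun x y => f (1 * u x) y)) ?u1 ?mulr1 //; lin_tac. Qed.

Lemma chi_cou a h : sw (chi a h) (fun x y => eA x * eH y) = eA a * eH h.
Proof.
rewrite chiE.
transitivity (sw (DH h) (fun x y => eH x * (eA a * eH y))).
  by apply: sw_ext => x y; rewrite (h_emul hA) eu; kring.
by rewrite (h_coul_s hH) //; apply: slin_mulr; exact: slin_cou.
Qed.

Lemma chi_alin (U : lmodType K) (f : A -> H -> U) : lin2 f -> forall b a h,
       sw (chi (b * a) h) f = sw (chi a h) (fun x y => f (b * x) y).
Proof. by move=> hf b a h; rewrite !chiE; apply: sw_ext => x y; rewrite mulrA. Qed.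

Lemma chi_colin (U : lmodType K) (F : A -> H -> H -> U) : lin3 F -> forall a h,
       sw (chi a h) (fun x y => sw (DH y) (fun y1 y2 => F x y1 y2))
       = sw (DH h) (fun h1 h2 => sw (chi a h1) (fun x y => F x y h2)).
Proof.
move=> hF a h; rewrite chiE.
transitivity (sw (DH h) (fun h1 h2 => sw (DH h1) (fun x y => F (a * u x) y h2))); last first.
  by apply: sw_ext => h1 h2; rewrite chiE.
by rewrite (h_CA hH (f := fun x y h2 => F (a * u x) y h2)) //; lin_tac.
Qed.

Lemma lazy4 (U : lmodType K) (G : A -> H -> A -> H -> U) : lin4 G -> forall h,
  sw (DH h) (fun h1 h2 => sw (DH h1) (fun k1 k2 => sw (DH h2) (fun y1 y2 => G (u k1) y1 (u k2) y2))) =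
  sw (DH h) (fun h1 h2 => sw (DH h1) (fun k1 k2 => sw (DH h2) (fun m1 m2 => G (u k1) k2 (u m1) m2))).
Proof.
move=> hG h.
rewrite (h_CA hH (f := fun k1 k2 h2 => sw (DH h2) (fun y1 y2 => G (u k1) y1 (u k2) y2))); last by lin_tac.
rewrite (h_CA hH (f := fun k1 k2 h2 => sw (DH h2) (fun m1 m2 => G (u k1) k2 (u m1) m2))); last by lin_tac.
apply: sw_ext => p1 r.
rewrite -(h_CA hH (f := fun p2 p3 p4 => G (u p1) p3 (u p2) p4)); last by lin_tac.
rewrite -(h_CA hH (f := fun p2 p3 p4 => G (u p1) p2 (u p3) p4)); last by lin_tac.
apply: sw_ext => w p4.
by symmetry; apply: (ulazy (f := fun q z => G (u p1) q z p4)); lin_tac.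
Qed.

Lemma chi_coal (U : lmodType K) (F : A -> H -> A -> H -> U) : lin4 F -> forall a h,
       sw (chi a h) (fun x y => sw (DA x) (fun x1 x2 => sw (DH y) (fun y1 y2 =>
          F x1 y1 x2 y2)))
       = sw (DA a) (fun a1 a2 => sw (DH h) (fun h1 h2 =>
          sw (chi a1 h1) (fun x y => sw (chi a2 h2) (fun x' y' => F x y x' y')))).
Proof.
move=> hF a h; rewrite chiE.
transitivity (sw (DA a) (fun a1 a2 => sw (DH h) (fun h1 h2 => sw (DH h1) (fun k1 k2 =>
   sw (DH h2) (fun y1 y2 => F (a1 * u k1) y1 (a2 * u k2) y2))))).
  rewrite sw_swap; apply: sw_ext => h1 h2.
  rewrite (h_Dmul hA (f := fun x1 x2 => sw (DH h2) (fun y1 y2 => F x1 y1 x2 y2))); last by lin_tac.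
  apply: sw_ext => a1 a2.
  by rewrite (ucoal (f := fun v1 v2 => sw (DH h2) (fun y1 y2 => F (a1 * v1) y1 (a2 * v2) y2))) //; lin_tac.
apply: sw_ext => a1 a2.
transitivity (sw (DH h) (fun h1 h2 => sw (DH h1) (fun k1 k2 =>
   sw (DH h2) (fun m1 m2 => F (a1 * u k1) k2 (a2 * u m1) m2)))); last first.
  by apply: sw_ext => h1 h2; rewrite chiE; apply: sw_ext => k1 k2; rewrite chiE.
by apply: (lazy4 (G := fun p q p' q' => F (a1 * p) q (a2 * p') q')); lin_tac.
Qed.

Lemma INS (U : lmodType K) (F : A -> H -> U) : lin2 F -> forall X Y,
  F X Y = sw (DH Y) (fun y1 z => sw (DH z) (fun y2 y3 => F (X * SA (u y1) * u y2) y3)).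
Proof.
move=> hF X Y; symmetry.
rewrite -(h_CA hH (f := fun y1 y2 y3 => F (X * SA (u y1) * u y2) y3)); last by lin_tac.
rewrite (h_coul_gen hH (L := F X)) //; first by lin_tac.
move=> w y3.
transitivity (F (X * sw (DH w) (fun y1 y2 => SA (u y1) * u y2)) y3).
  by rewrite (sw_lin _ _ (L := fun z => F (X * z) y3)); [apply: sw_ext => ? ?; rewrite !mulrA | lin_tac].
by rewrite Su_ -scalerAr mulr1 (lin1_scale (f := fun z => F z y3)) //; lin_tac.
Qed.

Lemma RG4 (U : lmodType K) (B : H -> H -> H -> H -> U) : lin4 B -> forall k,
 sw (DH k) (fun k1 r => sw (DH r) (fun k2 k3 => sw (DH k3) (fun a1 a2 => B k1 k2 a1 a2))) =
 sw (DH k) (fun P Q => sw (DH P) (fun k1 w => sw (DH w) (fun k2 a1 => B k1 k2 a1 Q))).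
Proof.
move=> hB k.
transitivity (sw (DH k) (fun k1 r => sw (DH r) (fun w a2 => sw (DH w) (fun k2 a1 => B k1 k2 a1 a2)))).
  by apply: sw_ext => k1 r; rewrite (h_CA hH (f := fun k2 a1 a2 => B k1 k2 a1 a2)) //; lin_tac.
by rewrite (h_CA hH (f := fun k1 w a2 => sw (DH w) (fun k2 a1 => B k1 k2 a1 a2))) //; lin_tac.
Qed.

Lemma E1 (U : lmodType K) (F : A -> H -> U) : lin2 F -> forall k g,
  sw (DH k) (fun k1 k2 => sw (DH g) (fun g1 g2 => F (u (k1 * g1)) (k2 * g2))) =
  sw (DH k) (fun k1 r => sw (DH r) (fun k2 k3 => sw (DH g) (fun g1 g2 =>
     F (u k1 * rt k2 (u g1)) (k3 * g2)))).
Proof.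
move=> hF k g; symmetry.
transitivity (sw (DH k) (fun k1 r => sw (DH r) (fun k2 k3 => sw (DH g) (fun g1 g2 =>
  sw (DH k3) (fun a1 a2 => sw (DH g2) (fun b1 b2 => sw (DH a2) (fun c1 c2 => sw (DH b2) (fun d1 d2 =>
  F (u k1 * rt k2 (u g1) * SA (u (a1 * b1)) * u (c1 * d1)) (c2 * d2))))))))).
  apply: sw_ext => k1 r; apply: sw_ext => k2 k3; apply: sw_ext => g1 g2.
  rewrite (INS hF) (h_Dmul hH (f := fun Y1 Z => sw (DH Z) (fun Y2 Y3 =>
     F (u k1 * rt k2 (u g1) * SA (u Y1) * u Y2) Y3))); last by lin_tac.
  apply: sw_ext => a1 a2; apply: sw_ext => b1 b2.
  by rewrite (h_Dmul hH (f := fun Y2 Y3 => F (u k1 * rt k2 (u g1) * SA (u (a1 * b1)) * u Y2) Y3)) //; lin_tac.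
transitivity (sw (DH k) (fun k1 r => sw (DH r) (fun k2 k3 => sw (DH k3) (fun a1 a2 => sw (DH g) (fun g1 g2 =>
  sw (DH g2) (fun b1 b2 => sw (DH a2) (fun c1 c2 => sw (DH b2) (fun d1 d2 =>
  F (u k1 * rt k2 (u g1) * SA (u (a1 * b1)) * u (c1 * d1)) (c2 * d2))))))))).
  by apply: sw_ext => k1 r; apply: sw_ext => k2 k3; rewrite sw_swap.
rewrite (RG4 (B := fun k1 k2 a1 a2 => sw (DH g) (fun g1 g2 =>
  sw (DH g2) (fun b1 b2 => sw (DH a2) (fun c1 c2 => sw (DH b2) (fun d1 d2 =>
  F (u k1 * rt k2 (u g1) * SA (u (a1 * b1)) * u (c1 * d1)) (c2 * d2))))))); last by lin_tac.
transitivity (sw (DH k) (fun P Q => sw (DH g) (fun P' Q' => sw (DH P) (fun k1 w => sw (DH w) (fun k2 a1 =>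
  sw (DH P') (fun g1 b1 => sw (DH Q) (fun c1 c2 => sw (DH Q') (fun d1 d2 =>
  F (u k1 * rt k2 (u g1) * SA (u (a1 * b1)) * u (c1 * d1)) (c2 * d2))))))))).
  apply: sw_ext => P Q.
  transitivity (sw (DH P) (fun k1 w => sw (DH w) (fun k2 a1 => sw (DH g) (fun P' Q' =>
    sw (DH P') (fun g1 b1 => sw (DH Q) (fun c1 c2 => sw (DH Q') (fun d1 d2 =>
    F (u k1 * rt k2 (u g1) * SA (u (a1 * b1)) * u (c1 * d1)) (c2 * d2)))))))).
    apply: sw_ext => k1 w; apply: sw_ext => k2 a1.
    by rewrite (h_CA hH (f := fun g1 b1 b2 => sw (DH Q) (fun c1 c2 => sw (DH b2) (fun d1 d2 =>
      F (u k1 * rt k2 (u g1) * SA (u (a1 * b1)) * u (c1 * d1)) (c2 * d2))))) //; lin_tac.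
  by rewrite [in RHS]sw_swap; apply: sw_ext => k1 w; rewrite sw_swap.
transitivity (sw (DH k) (fun P Q => sw (DH g) (fun P' Q' => (eH P' * eH P) *:
  sw (DH Q) (fun c1 c2 => sw (DH Q') (fun d1 d2 => F (1 * u (c1 * d1)) (c2 * d2)))))).
  apply: sw_ext => P Q; apply: sw_ext => P' Q'.
  transitivity ((fun z => sw (DH Q) (fun c1 c2 => sw (DH Q') (fun d1 d2 => F (z * u (c1 * d1)) (c2 * d2))))
    (sw (DH P) (fun k1 w => sw (DH w) (fun k2 a1 => sw (DH P') (fun g1 b1 =>
        u k1 * rt k2 (u g1) * SA (u (a1 * b1))))))).
    rewrite (sw_lin _ _ (L := fun z => sw (DH Q) (fun c1 c2 => sw (DH Q') (fun d1 d2 => F (z * u (c1 * d1)) (c2 * d2))))); last by lin_tac.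
    apply: sw_ext => k1 w.
    rewrite (sw_lin _ _ (L := fun z => sw (DH Q) (fun c1 c2 => sw (DH Q') (fun d1 d2 => F (z * u (c1 * d1)) (c2 * d2))))); last by lin_tac.
    apply: sw_ext => k2 a1.
    by rewrite (sw_lin _ _ (L := fun z => sw (DH Q) (fun c1 c2 => sw (DH Q') (fun d1 d2 => F (z * u (c1 * d1)) (c2 * d2))))); last by lin_tac.
  rewrite coc /=.
  by rewrite (lin1_scale (f := fun z => sw (DH Q) (fun c1 c2 => sw (DH Q') (fun d1 d2 => F (z * u (c1 * d1)) (c2 * d2))))) //; lin_tac.
rewrite [in LHS](h_coul_gen hH (L := fun z => sw (DH g) (fun P' Q' => eH P' *:
  sw (DH z) (fun c1 c2 => sw (DH Q') (fun d1 d2 => F (1 * u (c1 * d1)) (c2 * d2))))));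
  [| by lin_tac | by move=> P Q; rewrite -sw_scale; apply: sw_ext => P' Q'; scal].
rewrite [in LHS](h_coul_gen hH (L := fun z => sw (DH k) (fun c1 c2 => sw (DH z) (fun d1 d2 => F (1 * u (c1 * d1)) (c2 * d2)))));
  [| by lin_tac | by []].
by apply: sw_ext => c1 c2; apply: sw_ext => d1 d2; rewrite mul1r.
Qed.

Lemma KEY (U : lmodType K) (F : A -> H -> U) : lin2 F -> forall k g,
 sw (DH k) (fun k1 k2 => sw (DH k2) (fun q1 q2 => sw (DH g) (fun g1 g2 =>
    F (SA (u k1) * u (q1 * g1)) (q2 * g2)))) =
 sw (DH k) (fun k1 k2 => sw (DH g) (fun g1 g2 => F (rt k1 (u g1)) (k2 * g2))).
Proof.
move=> hF k g.
transitivity (sw (DH k) (fun k1 k2 => sw (DH k2) (fun q1 r => sw (DH r) (fun q2 q3 =>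
  sw (DH g) (fun g1 g2 => F (SA (u k1) * (u q1 * rt q2 (u g1))) (q3 * g2)))))).
  by apply: sw_ext => k1 k2; rewrite (E1 (F := fun z y => F (SA (u k1) * z) y)) //; lin_tac.
rewrite -(h_CA hH (f := fun k1 q1 r => sw (DH r) (fun q2 q3 =>
  sw (DH g) (fun g1 g2 => F (SA (u k1) * (u q1 * rt q2 (u g1))) (q3 * g2))))); last by lin_tac.
rewrite [in LHS](h_coul_gen hH (L := fun z => sw (DH z) (fun q2 q3 => sw (DH g) (fun g1 g2 =>
   F (rt q2 (u g1)) (q3 * g2))))); [by [] | by lin_tac |].
move=> x r.
rewrite sw_swap -sw_scale; apply: sw_ext => q2 q3.
rewrite sw_swap -sw_scale; apply: sw_ext => g1 g2.
transitivity (F (sw (DH x) (fun k1 q1 => SA (u k1) * u q1) * rt q2 (u g1)) (q3 * g2)).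
  rewrite (sw_lin _ _ (L := fun z => F (z * rt q2 (u g1)) (q3 * g2))); last by lin_tac.
  by apply: sw_ext => k1 q1; rewrite mulrA.
by rewrite Su_ -scalerAl mul1r (lin1_scale (f := fun z => F z (q3 * g2))) //; lin_tac.
Qed.

Lemma chi_mul_L (U : lmodType K) (f : A -> H -> U) : lin2 f -> forall a h c g,
  sw (DH h) (fun h1 h2 => sw (DA c) (fun c1 c2 => sw (chi (a * rt' h1 c1) (lt h2 c2 * g)) f)) =
  sw (DH h) (fun p1 r => sw (DH r) (fun p2 s => sw (DA c) (fun d1 z =>
    sw (DH (lt s z)) (fun k1 k2 => sw (DH g) (fun g1 g2 =>
      f (a * u p1 * rt p2 d1 * rt k1 (u g1)) (k2 * g2)))))).
Proof.
move=> hf a h c g.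
transitivity (sw (DH h) (fun h1 h2 => sw (DA c) (fun c1 c2 => sw (DH h1) (fun p1 p' =>
  sw (DH p') (fun p2 p3 => sw (DA c1) (fun d1 d2 => sw (DH (lt h2 c2)) (fun q1 q2 =>
  sw (DH g) (fun g1 g2 => f (a * (u p1 * rt p2 d1 * SA (u (lt p3 d2))) * u (q1 * g1)) (q2 * g2))))))))).
  apply: sw_ext => h1 h2; apply: sw_ext => c1 c2.
  rewrite chiE (h_Dmul hH (f := fun x y => f (a * rt' h1 c1 * u x) y)); last by lin_tac.
  rewrite rtf (sw_lin _ _ (L := fun z => sw (DH (lt h2 c2)) (fun q1 q2 => sw (DH g) (fun g1 g2 =>
     f (a * z * u (q1 * g1)) (q2 * g2))))); last by lin_tac.
  apply: sw_ext => p1 p'.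
  rewrite (sw_lin _ _ (L := fun z => sw (DH (lt h2 c2)) (fun q1 q2 => sw (DH g) (fun g1 g2 =>
     f (a * z * u (q1 * g1)) (q2 * g2))))); last by lin_tac.
  apply: sw_ext => p2 p3.
  by rewrite (sw_lin _ _ (L := fun z => sw (DH (lt h2 c2)) (fun q1 q2 => sw (DH g) (fun g1 g2 =>
     f (a * z * u (q1 * g1)) (q2 * g2))))); last by lin_tac.
transitivity (sw (DH h) (fun h1 h2 => sw (DH h1) (fun p1 p' =>
  sw (DH p') (fun p2 p3 => sw (DA c) (fun c1 c2 => sw (DA c1) (fun d1 d2 => sw (DH (lt h2 c2)) (fun q1 q2 =>
  sw (DH g) (fun g1 g2 => f (a * (u p1 * rt p2 d1 * SA (u (lt p3 d2))) * u (q1 * g1)) (q2 * g2))))))))).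
  apply: sw_ext => h1 h2; rewrite sw_swap; apply: sw_ext => p1 p'.
  by rewrite sw_swap.
transitivity (sw (DH h) (fun h1 h2 => sw (DH h1) (fun p1 p' =>
  sw (DH p') (fun p2 p3 => sw (DA c) (fun d1 z => sw (DA z) (fun d2 c2 => sw (DH (lt h2 c2)) (fun q1 q2 =>
  sw (DH g) (fun g1 g2 => f (a * (u p1 * rt p2 d1 * SA (u (lt p3 d2))) * u (q1 * g1)) (q2 * g2))))))))).
  apply: sw_ext => h1 h2; apply: sw_ext => p1 p'; apply: sw_ext => p2 p3.
  by rewrite (h_CA hA (f := fun d1 d2 c2 => sw (DH (lt h2 c2)) (fun q1 q2 =>
  sw (DH g) (fun g1 g2 => f (a * (u p1 * rt p2 d1 * SA (u (lt p3 d2))) * u (q1 * g1)) (q2 * g2))))) //; lin_tac.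
rewrite (h_CA hH (f := fun p1 p' h2 => sw (DH p') (fun p2 p3 => sw (DA c) (fun d1 z => sw (DA z) (fun d2 c2 => sw (DH (lt h2 c2)) (fun q1 q2 =>
  sw (DH g) (fun g1 g2 => f (a * (u p1 * rt p2 d1 * SA (u (lt p3 d2))) * u (q1 * g1)) (q2 * g2)))))))); last by lin_tac.
apply: sw_ext => p1 r.
rewrite (h_CA hH (f := fun p2 p3 h2 => sw (DA c) (fun d1 z => sw (DA z) (fun d2 c2 => sw (DH (lt h2 c2)) (fun q1 q2 =>
  sw (DH g) (fun g1 g2 => f (a * (u p1 * rt p2 d1 * SA (u (lt p3 d2))) * u (q1 * g1)) (q2 * g2))))))); last by lin_tac.
apply: sw_ext => p2 s.
rewrite sw_swap; apply: sw_ext => d1 z.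
rewrite -(mp_ltD m (f := fun k1 k2 => sw (DH k2) (fun q1 q2 =>
  sw (DH g) (fun g1 g2 => f (a * (u p1 * rt p2 d1 * SA (u k1)) * u (q1 * g1)) (q2 * g2))))); last by lin_tac.
rewrite -(KEY (F := fun z y => f (a * u p1 * rt p2 d1 * z) y)); last by lin_tac.
apply: sw_ext => k1 k2; apply: sw_ext => q1 q2; apply: sw_ext => g1 g2.
by rewrite !mulrA.
Qed.

Lemma chi_mul_R (U : lmodType K) (f : A -> H -> U) : lin2 f -> forall a h c g,
  sw (chi a h) (fun x y => sw (chi c g) (fun x' y' =>
             sw (DH y) (fun y1 y2 => sw (DA x') (fun x1' x2' =>
               f (x * rt y1 x1') (lt y2 x2' * y'))))) =
  sw (DH h) (fun p1 r => sw (DH r) (fun p2 s => sw (DA c) (fun d1 z =>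
    sw (DH (lt s z)) (fun k1 k2 => sw (DH g) (fun g1 g2 =>
      f (a * u p1 * rt p2 d1 * rt k1 (u g1)) (k2 * g2)))))).
Proof.
move=> hf a h c g.
transitivity (sw (DH h) (fun h1 h2 => sw (DH g) (fun g1 g2 => sw (DH h2) (fun y1 y2 =>
   sw (DA c) (fun c1 c2 => f (a * u h1 * rt y1 (c1 * u g1)) (lt y2 c2 * g2)))))).
  rewrite chiE; apply: sw_ext => h1 h2; rewrite chiE; apply: sw_ext => g1 g2.
  apply: sw_ext => y1 y2.
  rewrite (h_Dmul hA (f := fun x1 x2 => f (a * u h1 * rt y1 x1) (lt y2 x2 * g2))); last by lin_tac.
  apply: sw_ext => c1 c2.
  rewrite (ucoal (f := fun v1 v2 => f (a * u h1 * rt y1 (c1 * v1)) (lt y2 (c2 * v2) * g2))); last by lin_tac.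
  rewrite (h_cour_gen hH (L := fun z => f (a * u h1 * rt y1 (c1 * u z)) (lt y2 c2 * g2))) //; first by lin_tac.
  move=> w1 w2; rewrite (mp_ltM m) ltu -scalerAl.
  by rewrite (lin1_scale (f := fun z => f (a * u h1 * rt y1 (c1 * u w1)) z)) //; lin_tac.
transitivity (sw (DH h) (fun h1 h2 => sw (DH g) (fun g1 g2 => sw (DH h2) (fun y1 y2 =>
   sw (DA c) (fun c1 c2 => sw (DH y1) (fun t1 t2 => sw (DA c1) (fun e1 e2 =>
   f (a * u h1 * (rt t1 e1 * rt (lt t2 e2) (u g1))) (lt y2 c2 * g2)))))))).
  apply: sw_ext => h1 h2; apply: sw_ext => g1 g2; apply: sw_ext => y1 y2; apply: sw_ext => c1 c2.
  rewrite (mp_rtab m) (sw_lin _ _ (L := fun z => f (a * u h1 * z) (lt y2 c2 * g2))); last by lin_tac.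
  apply: sw_ext => t1 t2.
  by rewrite (sw_lin _ _ (L := fun z => f (a * u h1 * z) (lt y2 c2 * g2))); last by lin_tac.
transitivity (sw (DH h) (fun h1 h2 => sw (DH h2) (fun y1 y2 => sw (DH y1) (fun t1 t2 =>
   sw (DA c) (fun c1 c2 => sw (DA c1) (fun e1 e2 => sw (DH g) (fun g1 g2 =>
   f (a * u h1 * (rt t1 e1 * rt (lt t2 e2) (u g1))) (lt y2 c2 * g2)))))))).
  apply: sw_ext => h1 h2; rewrite sw_swap; apply: sw_ext => y1 y2.
  transitivity (sw (DA c) (fun c1 c2 => sw (DH y1) (fun t1 t2 => sw (DA c1) (fun e1 e2 => sw (DH g) (fun g1 g2 =>
   f (a * u h1 * (rt t1 e1 * rt (lt t2 e2) (u g1))) (lt y2 c2 * g2)))))); last by rewrite sw_swap.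
  rewrite sw_swap; apply: sw_ext => c1 c2; rewrite sw_swap; apply: sw_ext => t1 t2.
  by rewrite sw_swap.
apply: sw_ext => p1 r.
rewrite (h_CA hH (f := fun t1 t2 y2 => sw (DA c) (fun c1 c2 => sw (DA c1) (fun e1 e2 => sw (DH g) (fun g1 g2 =>
   f (a * u p1 * (rt t1 e1 * rt (lt t2 e2) (u g1))) (lt y2 c2 * g2)))))); last by lin_tac.
apply: sw_ext => p2 s.
transitivity (sw (DH s) (fun t2 y2 => sw (DA c) (fun d1 z => sw (DA z) (fun e2 c2 => sw (DH g) (fun g1 g2 =>
   f (a * u p1 * (rt p2 d1 * rt (lt t2 e2) (u g1))) (lt y2 c2 * g2)))))).
  apply: sw_ext => t2 y2.
  by rewrite (h_CA hA (f := fun e1 e2 c2 => sw (DH g) (fun g1 g2 =>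
   f (a * u p1 * (rt p2 e1 * rt (lt t2 e2) (u g1))) (lt y2 c2 * g2)))) //; lin_tac.
rewrite sw_swap; apply: sw_ext => d1 z.
rewrite -(mp_ltD m (f := fun k1 k2 => sw (DH g) (fun g1 g2 =>
   f (a * u p1 * (rt p2 d1 * rt k1 (u g1))) (k2 * g2)))); last by lin_tac.
by apply: sw_ext => k1 k2; apply: sw_ext => g1 g2; rewrite !mulrA.
Qed.

Lemma chi_mul (U : lmodType K) (f : A -> H -> U) : lin2 f -> forall a h c g,
         sw (DH h) (fun h1 h2 => sw (DA c) (fun c1 c2 =>
             sw (chi (a * rt' h1 c1) (lt h2 c2 * g)) f))
         = sw (chi a h) (fun x y => sw (chi c g) (fun x' y' =>
             sw (DH y) (fun y1 y2 => sw (DA x') (fun x1' x2' =>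
               f (x * rt y1 x1') (lt y2 x2' * y'))))).
Proof. by move=> hf a h c g; rewrite chi_mul_L // chi_mul_R. Qed.

End Constr.

Unset Implicit Arguments. Set Strict Implicit. Set Printing Implicit Defensive.

Theorem corollary3p7 (K : fieldType) (A H : algType K)
  (sA : hopf_str A) (sH : hopf_str H)
  (lt lt' : H -> A -> H) (rt rt' : H -> A -> A) :
  is_hopf sA -> is_hopf sH ->
  matched_pair sA sH lt rt -> matched_pair sA sH lt' rt' ->
  (bicrossed_iso sA sH lt rt lt' rt' <->
   (lt' = lt /\
    exists u : H -> A, coalg_lazy_cocycle sA sH u /\
      (forall h c, rt' h c =
         sw (cop sH h) (fun h1 h' => sw (cop sH h') (fun h2 h3 =>
           sw (cop sA c) (fun c1 c2 =>
             u h1 * rt h2 c1 * antip sA (u (lt h3 c2)))))) /\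
      (forall h g,
         sw (cop sH h) (fun h1 h' => sw (cop sH h') (fun h2 h3 =>
           sw (cop sH g) (fun g1 g2 =>
             u h1 * rt h2 (u g1) * antip sA (u (h3 * g2)))))
         = (cou sH g * cou sH h) *: 1) /\
      (forall h g, lt h (u g) = cou sH g *: h))).
Proof.
move=> hA hH mp mp'.
have l := mp_ltlin mp; have r := mp_rtlin mp; have l' := mp_ltlin mp'; have r' := mp_rtlin mp'.
have hSA := h_Slin hA; have hSH := h_Slin hH.
split.
- move=> iso.
  have := bicrossed_sym hA hH l r l' r' iso.
  case=> psi [tmp [[phi [tmphi inv]] [mulp [coalp [coup [alinp colinp]]]]]].
  have unitp := fun U f hf => (mulp U f hf).1.
  have mulp' := fun U f hf => (mulp U f hf).2.
  clear inv tmphi phi.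
  split.
    apply: functional_extensionality => h; apply: functional_extensionality => c.
    symmetry; by eapply lteq; eassumption.
  exists (uu sH psi).
  split.
    split; first by eapply uu_lin; eassumption.
    split; first by move=> U f hf h; eapply ucoal; eassumption.
    split; first by move=> h; eapply eu; eassumption.
    split; first by eapply uu1; eassumption.
    by move=> U f hf h; eapply ulazy; eassumption.
  split; first by move=> h c; eapply rtform; eassumption.
  split; first by move=> h g; eapply cocyc; eassumption.
  by move=> h g; eapply ltu; eassumption.
- case=> E [u [[hu [ucoal [eu [u1 ulazy]]]] [rtf [coc ltu]]]].
  subst lt'.
  apply: (bicrossed_sym hA hH l r' l r).
  exists (chi sH u).
  split; first by eapply chi_tm; eassumption.
  split.
    exists (chinv sA sH u); split; first by eapply chinv_tm; eassumption.
    by move=> U f hf a h; eapply chi_inv; eassumption.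
  split.
    move=> U f hf; split; first by eapply chi_unit; eassumption.
    by move=> a h c g; eapply chi_mul; eassumption.
  split; first by move=> U f hf a h; eapply chi_coal; eassumption.
  split; first by move=> a h; eapply chi_cou; eassumption.
  split; first by move=> U f hf b a h; eapply chi_alin; eassumption.
  by move=> U f hf a h; eapply chi_colin; eassumption.
Qed.
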